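(* Let $G$ be an equationally Noetherian group with a solvable word problem. Then every finitely generated, recursively presented group $H$ which is residually $G$ has a solvable word problem.
   Context: A group $G$ is equationally Noetherian if for every finite tuple of variables $\mathbf{x}=(x_1,\dots,x_n)$ and every set $\Sigma\subseteq G\ast F(\mathbf{x})$ of equations over $G$, there is a finite subset $\Sigma_0\subseteq\Sigma$ such that the set of solutions $\{\mathbf{g}\in G^n : \sigma(\mathbf{g})=1\ \forall\sigma\in\Sigma\}$ equals $\{\mathbf{g}\in G^n : \sigma(\mathbf{g})=1\ \forall\sigma\in\Sigma_0\}$, where $\sigma(\mathbf{g})$ is obtained by substituting $g_i$ for $x_i$. A group $H$ is residually $G$ if for every $1\ne h\in H$ there is a homomorphism $f:H\to G$ with $f(h)\ne 1$. *)

(* Defs.v *)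
From mathcomp Require Import all_boot.
Set Implicit Arguments. Unset Strict Implicit. Unset Printing Implicit Defensive.

Record group := Group {
  gcar :> Type;
  gmul : gcar -> gcar -> gcar;
  ginv : gcar -> gcar;
  gone : gcar;
  gmulA : forall x y z, gmul x (gmul y z) = gmul (gmul x y) z;
  gmul1 : forall x, gmul gone x = x;
  gmulV : forall x, gmul (ginv x) x = gone
}.

Definition is_hom (H G : group) (f : H -> G) : Prop :=
  forall a b : H, f (gmul a b) = gmul (f a) (f b).

Definition residually (H G : group) : Prop :=
  forall h : H, h <> gone H -> exists f : H -> G, is_hom f /\ f h <> gone G.

(* Words over an alphabet A: letters (a, false) = a, (a, true) = a^-1. *)
Definition word (A : Type) := seq (A * bool).

Definition eval_letter (G : group) (A : Type) (e : A -> G) (l : A * bool) : G :=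
  if l.2 then ginv (e l.1) else e l.1.

Definition eval_word (G : group) (A : Type) (e : A -> G) (w : word A) : G :=
  foldr (fun l x => gmul (eval_letter e l) x) (gone G) w.

Definition inv_letter (A : Type) (l : A * bool) : A * bool := (l.1, ~~ l.2).

Definition generates (G : group) (m : nat) (gen : 'I_m -> G) : Prop :=
  forall g : G, exists w : word 'I_m, eval_word gen w = g.

(* Equations over G in variables x_1..x_n: words over the alphabet      *)
(* G + {x_1..x_n} (constants from G and variables), i.e. representatives *)
(* of elements of G * F(x).                                              *)
Definition equation (G : group) (n : nat) := word (G + 'I_n)%type.

Definition subst (G : group) (n : nat) (g : 'I_n -> G) (a : (G + 'I_n)%type) : G :=
  match a with inl c => c | inr i => g i end.

Definition solves (G : group) (n : nat) (Sigma : equation G n -> Prop)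
  (g : 'I_n -> G) : Prop :=
  forall s, Sigma s -> eval_word (subst g) s = gone G.

Fixpoint inl_ (T : Type) (x : T) (s : seq T) : Prop :=
  match s with [::] => False | y :: s' => y = x \/ inl_ x s' end.

Definition equationally_noetherian (G : group) : Prop :=
  forall (n : nat) (Sigma : equation G n -> Prop),
    exists Sigma0 : seq (equation G n),
      (forall s, inl_ s Sigma0 -> Sigma s) /\
      (forall g : 'I_n -> G,
          solves Sigma g <-> solves (fun s => inl_ s Sigma0) g).

Inductive code : Type :=
| Zero : code
| Succ : code
| Proj : nat -> code
| Comp : code -> seq code -> code
| Prim : code -> code -> code
| Mu : code -> code.

Inductive eval : code -> seq nat -> nat -> Prop :=
| ev_zero v : eval Zero v 0
| ev_succ x v : eval Succ (x :: v) x.+1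
| ev_proj i v : i < size v -> eval (Proj i) v (nth 0 v i)
| ev_comp f gs v ws y : evals gs v ws -> eval f ws y -> eval (Comp f gs) v y
| ev_prim0 f g v y : eval f v y -> eval (Prim f g) (0 :: v) y
| ev_primS f g n v z y :
    eval (Prim f g) (n :: v) z -> eval g (n :: z :: v) y ->
    eval (Prim f g) (n.+1 :: v) y
| ev_mu f v n :
    eval f (n :: v) 0 ->
    (forall m, m < n -> exists k, eval f (m :: v) k.+1) ->
    eval (Mu f) v n
with evals : seq code -> seq nat -> seq nat -> Prop :=
| evs_nil v : evals [::] v [::]
| evs_cons g gs v y ys : eval g v y -> evals gs v ys -> evals (g :: gs) v (y :: ys).

(* Words over 'I_m are coded as natural numbers by the (computable) *)
(* canonical countType encoding [pickle].                            *)

Definition re_words (m : nat) (R : word 'I_m -> Prop) : Prop :=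
  exists c : code, forall w : word 'I_m, R w <-> exists y, eval c [:: pickle w] y.

Definition solvable_WP_wrt (G : group) (m : nat) (gen : 'I_m -> G) : Prop :=
  exists c : code, forall w : word 'I_m,
    (eval_word gen w = gone G -> eval c [:: pickle w] 0) /\
    (eval_word gen w <> gone G -> eval c [:: pickle w] 1).

Definition has_solvable_WP (G : group) : Prop :=
  exists (m : nat) (gen : 'I_m -> G), generates gen /\ solvable_WP_wrt gen.

(* trivial_in R w : w represents 1 in <x | R>, i.e. w is reachable from *)
(* the empty word by inserting/deleting cancelling pairs a a^-1 and      *)
(* relators r in R (in arbitrary positions).                             *)
Inductive trivial_in (k : nat) (R : word 'I_k -> Prop) : word 'I_k -> Prop :=
| tr_nil : trivial_in R [::]
| tr_ins_pair u v a :
    trivial_in R (u ++ v) -> trivial_in R (u ++ [:: a; inv_letter a] ++ v)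
| tr_del_pair u v a :
    trivial_in R (u ++ [:: a; inv_letter a] ++ v) -> trivial_in R (u ++ v)
| tr_ins_rel u v r :
    R r -> trivial_in R (u ++ v) -> trivial_in R (u ++ r ++ v)
| tr_del_rel u v r :
    R r -> trivial_in R (u ++ r ++ v) -> trivial_in R (u ++ v).

Definition presents (H : group) (k : nat) (h : 'I_k -> H)
  (R : word 'I_k -> Prop) : Prop :=
  generates h /\ forall w, eval_word h w = gone H <-> trivial_in R w.

Definition recursively_presented_wrt (H : group) (k : nat) (h : 'I_k -> H) : Prop :=
  exists R : word 'I_k -> Prop, re_words R /\ presents h R.

(* Main.v *)
Require Import Defs.
From mathcomp Require Import all_boot.
From Stdlib Require Import Classical.
Set Implicit Arguments. Unset Strict Implicit. Unset Printing Implicit Defensive.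

Definition PRn (n : nat) (f : seq nat -> nat) :=
  exists c, forall v, size v = n -> eval c v (f v).

Lemma PR_ext n f g : (forall v, size v = n -> f v = g v) -> PRn n f -> PRn n g.
Proof. move=> e [c Hc]; exists c => v sv; rewrite -e //; exact: Hc. Qed.

Lemma PR_const n k : PRn n (fun _ => k).
Proof.
elim: k => [|k [c Hc]]; first by exists Zero => v _; constructor.
exists (Comp Succ [:: c]) => v sv; econstructor.
  by constructor; [apply: Hc | constructor].
constructor.
Qed.

Lemma PR_proj n i : i < n -> PRn n (fun v => nth 0 v i).
Proof. move=> lin; exists (Proj i) => v sv; constructor; by rewrite sv. Qed.

Definition allPR n (fs : seq (seq nat -> nat)) :=
  foldr (fun f P => PRn n f /\ P) True fs.

Lemma PR_compl n g fs : PRn (size fs) g -> allPR n fs ->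
  PRn n (fun v => g (map (fun f => f v) fs)).
Proof.
move=> [cg Hg] Hfs.
have [cs Hcs] : exists cs, forall v, size v = n -> evals cs v (map (fun f => f v) fs).
  elim: fs Hfs {Hg} => [|f fs IH] /= => [_|[[c Hc] /IH [cs Hcs]]].
    by exists [::] => v _; constructor.
  by exists (c :: cs) => v sv; constructor; [apply: Hc | apply: Hcs].
exists (Comp cg cs) => v sv; econstructor; first exact: Hcs.
by apply: Hg; rewrite size_map.
Qed.

Lemma PR_comp1 n g f : PRn 1 (fun v => g (nth 0 v 0)) -> PRn n f ->
  PRn n (fun v => g (f v)).
Proof. move=> Hg Hf; exact: (@PR_compl n _ [:: f] Hg). Qed.

Lemma PR_comp2 n g f1 f2 : PRn 2 (fun v => g (nth 0 v 0) (nth 0 v 1)) ->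
  PRn n f1 -> PRn n f2 -> PRn n (fun v => g (f1 v) (f2 v)).
Proof. move=> Hg H1 H2; exact: (@PR_compl n _ [:: f1; f2] Hg). Qed.

Lemma PR_comp3 n g f1 f2 f3 :
  PRn 3 (fun v => g (nth 0 v 0) (nth 0 v 1) (nth 0 v 2)) ->
  PRn n f1 -> PRn n f2 -> PRn n f3 -> PRn n (fun v => g (f1 v) (f2 v) (f3 v)).
Proof. move=> Hg H1 H2 H3; exact: (@PR_compl n _ [:: f1; f2; f3] Hg). Qed.

Fixpoint prec (g0 gS : seq nat -> nat) (j : nat) (v : seq nat) : nat :=
  match j with 0 => g0 v | j'.+1 => gS (j' :: prec g0 gS j' v :: v) end.

Lemma PR_prim n g0 gS : PRn n g0 -> PRn n.+2 gS ->
  PRn n.+1 (fun v => prec g0 gS (head 0 v) (behead v)).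
Proof.
move=> [c0 H0] [cS HS]; exists (Prim c0 cS) => [[|j v]] //= [sv].
elim: j => [|j IH] /=; first by constructor; apply: H0.
by econstructor; [exact: IH | apply: HS; rewrite /= sv].
Qed.

Lemma allPR_proj n idx : all (fun i => i < n) idx ->
  allPR n [seq (fun v => nth 0 v i) | i <- idx].
Proof. elim: idx => //= i idx IH /andP [li /IH]; split => //; exact: PR_proj. Qed.

Lemma PR_perm n m f idx : size idx = m -> all (fun i => i < n) idx -> PRn m f ->
  PRn n (fun v => f (map (nth 0 v) idx)).
Proof.
move=> si ai Hf.
have := @PR_compl n f [seq (fun v => nth 0 v i) | i <- idx].
rewrite size_map si => /(_ Hf (allPR_proj ai)).
by apply: PR_ext => v _; rewrite -map_comp.
Qed.

Lemma drop_as_map (v : seq nat) k m : size v = m + k ->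
  drop k v = map (nth 0 v) (map (addn k) (iota 0 m)).
Proof.
move=> sv; apply: (@eq_from_nth _ 0).
  by rewrite size_drop !size_map size_iota sv addnK.
move=> i; rewrite size_drop sv addnK => lim.
rewrite nth_drop (nth_map 0) ?size_map ?size_iota // (nth_map 0) ?size_iota //.
by rewrite nth_iota.
Qed.

Ltac sz2 v := case: v => [|a [|b [|? ?]]] //= _.

Lemma PR_succ0 : PRn 1 (fun v => (nth 0 v 0).+1).
Proof. by exists Succ => [[|a [|]]] //= _; constructor. Qed.

Lemma PR_succ n f : PRn n f -> PRn n (fun v => (f v).+1).
Proof. exact: PR_comp1 PR_succ0. Qed.

Lemma PR_add0 : PRn 2 (fun v => nth 0 v 0 + nth 0 v 1).
Proof.
have := @PR_prim 1 (fun v => nth 0 v 0) (fun v => (nth 0 v 1).+1) (@PR_proj 1 0 isT)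
  (PR_succ (@PR_proj 3 1 isT)).
apply: PR_ext => v; sz2 v; by elim: a => //= a ->.
Qed.

Lemma PR_add n f g : PRn n f -> PRn n g -> PRn n (fun v => f v + g v).
Proof. exact: PR_comp2 PR_add0. Qed.

Lemma PR_pred0 : PRn 1 (fun v => (nth 0 v 0).-1).
Proof.
have := @PR_prim 0 (fun _ => 0) (fun v => nth 0 v 0) (PR_const _ _) (@PR_proj 2 0 isT).
apply: PR_ext => [[|[|a] [|]]] //.
Qed.

Lemma PR_pred n f : PRn n f -> PRn n (fun v => (f v).-1).
Proof. exact: PR_comp1 PR_pred0. Qed.

Lemma PR_sub0 : PRn 2 (fun v => nth 0 v 0 - nth 0 v 1).
Proof.
have := @PR_prim 1 (fun v => nth 0 v 0) (fun v => (nth 0 v 1).-1) (@PR_proj 1 0 isT)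
   (PR_pred (@PR_proj 3 1 isT)).
move=> /(@PR_perm 2 2 _ [:: 1; 0] erefl isT); apply: PR_ext => v; sz2 v.
by elim: b => [|b /= ->]; rewrite ?subn0 ?subnS.
Qed.

Lemma PR_sub n f g : PRn n f -> PRn n g -> PRn n (fun v => f v - g v).
Proof. exact: PR_comp2 PR_sub0. Qed.

Lemma PR_mul0 : PRn 2 (fun v => nth 0 v 0 * nth 0 v 1).
Proof.
have := @PR_prim 1 (fun _ => 0) (fun v => nth 0 v 1 + nth 0 v 2) (PR_const _ _)
   (PR_add (@PR_proj 3 1 isT) (@PR_proj 3 2 isT)).
apply: PR_ext => v; sz2 v; elim: a => //= a ->; by rewrite mulSn addnC.
Qed.

Lemma PR_mul n f g : PRn n f -> PRn n g -> PRn n (fun v => f v * g v).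
Proof. exact: PR_comp2 PR_mul0. Qed.

Lemma PR_ifz0 : PRn 3 (fun v => if nth 0 v 0 == 0 then nth 0 v 1 else nth 0 v 2).
Proof.
have := @PR_prim 2 (fun v => nth 0 v 0) (fun v => nth 0 v 3) (@PR_proj 2 0 isT) (@PR_proj 4 3 isT).
apply: PR_ext => [[|[|a] [|b [|c [|]]]]] //.
Qed.

Lemma PR_ifz n f g h : PRn n f -> PRn n g -> PRn n h ->
  PRn n (fun v => if f v == 0 then g v else h v).
Proof. exact: (PR_comp3 (g := fun a b c => if a == 0 then b else c) PR_ifz0). Qed.

Lemma PR_if n (b : seq nat -> bool) g h : PRn n (fun v => b v) -> PRn n g -> PRn n h ->
  PRn n (fun v => if b v then g v else h v).
Proof.
move=> Hb Hg Hh; have := PR_ifz Hb Hh Hg; apply: PR_ext => v _; by case: (b v).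
Qed.

Lemma PR_eqn n f g : PRn n f -> PRn n g -> PRn n (fun v => f v == g v).
Proof.
move=> Hf Hg; have := PR_ifz (PR_add (PR_sub Hf Hg) (PR_sub Hg Hf)) (PR_const n 1) (PR_const n 0).
apply: PR_ext => v _; rewrite addn_eq0 !subn_eq0 -eqn_leq; by case: eqP.
Qed.

Lemma PR_ltn n f g : PRn n f -> PRn n g -> PRn n (fun v => f v < g v).
Proof.
move=> Hf Hg; have := PR_ifz (PR_sub (PR_add Hf (PR_const n 1)) Hg) (PR_const n 1) (PR_const n 0).
by apply: PR_ext => v _; rewrite addn1 subn_eq0; case: leqP.
Qed.

Lemma PR_andb n (f g : seq nat -> bool) : PRn n (fun v => f v) -> PRn n (fun v => g v) ->
  PRn n (fun v => f v && g v).
Proof. move=> Hf Hg; have := PR_mul Hf Hg; apply: PR_ext => v _; by case: (f v); case: (g v). Qed.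

Lemma PR_orb n (f g : seq nat -> bool) : PRn n (fun v => f v) -> PRn n (fun v => g v) ->
  PRn n (fun v => f v || g v).
Proof.
move=> Hf Hg; have := PR_if Hf (PR_const n 1) Hg; apply: PR_ext => v _; by case: (f v).
Qed.

Lemma PR_negb n (f : seq nat -> bool) : PRn n (fun v => f v) -> PRn n (fun v => ~~ f v).
Proof. move=> Hf; have := PR_if Hf (PR_const n 0) (PR_const n 1); apply: PR_ext => v _; by case: (f v). Qed.

Lemma PR_true n : PRn n (fun _ => true). Proof. exact: PR_const. Qed.
Lemma PR_false n : PRn n (fun _ => false). Proof. exact: PR_const. Qed.

Lemma PR_consl n k g fs : PRn (size fs + n) g -> allPR (n + k) fs ->
  PRn (n + k) (fun u => g (map (fun f => f u) fs ++ drop k u)).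
Proof.
move=> Hg Hfs.
set ps := [seq (fun v => nth 0 v i) | i <- map (addn k) (iota 0 n)].
have Hall : allPR (n + k) (fs ++ ps).
  clear Hg; elim: fs Hfs => [|f fs IH] /=; last by case=> Hf /IH.
  move=> _; apply: allPR_proj; apply/allP => i /mapP [j]; rewrite mem_iota => /andP [_ lj] ->.
  by rewrite addnC ltn_add2r.
have Hg' : PRn (size (fs ++ ps)) g by rewrite size_cat !size_map size_iota.
have [c Hc] := PR_compl Hg' Hall.
exists c => v sv; have := Hc v sv.
by rewrite map_cat /ps -map_comp (@drop_as_map v k n) // addnC.
Qed.

Lemma PR_drop n k f : PRn n f -> PRn (n + k) (fun u => f (drop k u)).
Proof. move=> Hf; exact: (@PR_consl n k f [::]). Qed.

Lemma PR_cons n f g : PRn n.+1 g -> PRn n f -> PRn n (fun v => g (f v :: v)).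
Proof. move=> Hg Hf; have := @PR_consl n 0 g [:: f]; rewrite addn0 => /(_ Hg).
by case=> // c Hc; exists c => v sv; have := Hc v sv; rewrite drop0. Qed.

Lemma PR_iter n (phi : nat -> nat) f g : PRn 1 (fun u => phi (nth 0 u 0)) ->
  PRn n f -> PRn n g -> PRn n (fun v => iter (f v) phi (g v)).
Proof.
move=> Hphi; apply: (PR_comp2 (g := fun a b => iter a phi b)).
have := @PR_prim 1 (fun v => nth 0 v 0) (fun v => phi (nth 0 v 1)) (@PR_proj 1 0 isT)
  (PR_comp1 Hphi (@PR_proj 3 1 isT)).
apply: PR_ext => [[|a [|b [|]]]] //= _; by elim: a => //= a ->.
Qed.

Lemma PR_find n (P : nat -> seq nat -> bool) L :
  PRn n.+1 (fun u => P (head 0 u) (behead u)) -> PRn n L ->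
  PRn n (fun v => find (P^~ v) (iota 0 (L v))).
Proof.
move=> HP HL; apply: (PR_cons (g := fun u => find (P^~ (behead u)) (iota 0 (head 0 u)))) => //.
have := @PR_prim n (fun _ => 0)
  (fun u => if nth 0 u 1 < nth 0 u 0 then nth 0 u 1 else
            if P (nth 0 u 0) (drop 2 u) then nth 0 u 0 else (nth 0 u 0).+1) (PR_const _ _).
case.
  apply: PR_if; first by apply: PR_ltn; apply: PR_proj.
    exact: PR_proj.
  apply: PR_if; last by apply: PR_succ; apply: PR_proj.
    have := @PR_consl n 2 (fun u => P (head 0 u) (behead u)) [:: fun u => nth 0 u 0] HP.
    rewrite addn2 => /(_ (conj (@PR_proj n.+2 0 isT) I)); by apply: PR_ext.
  exact: PR_proj.
move=> c Hc; apply: (PR_ext _ (ex_intro _ c Hc)) => u su; case: u su => [|j p] //= _.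
elim: j => [|j IH] //.
have E : iota 0 j.+1 = iota 0 j ++ [:: j] by rewrite -addn1 iotaD.
rewrite E find_cat /= IH drop0 size_iota.
rewrite has_find size_iota; case: ltnP => // lej.
by case: (P j p); rewrite ?addn0 ?addn1.
Qed.

Lemma PR_all n (P : nat -> seq nat -> bool) L :
  PRn n.+1 (fun u => P (head 0 u) (behead u)) -> PRn n L ->
  PRn n (fun v => all (P^~ v) (iota 0 (L v))).
Proof.
move=> HP HL; apply: (PR_cons (g := fun u => all (P^~ (behead u)) (iota 0 (head 0 u)))) => //.
have := @PR_prim n (fun _ => true)
  (fun u => (nth 0 u 1 != 0) && P (nth 0 u 0) (drop 2 u)) (PR_const _ _).
case.
  apply: PR_andb; first by apply: PR_negb; apply: PR_eqn; [apply: PR_proj|apply: PR_const].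
  have := @PR_consl n 2 (fun u => P (head 0 u) (behead u)) [:: fun u => nth 0 u 0] HP.
  rewrite addn2 => /(_ (conj (@PR_proj n.+2 0 isT) I)); by apply: PR_ext.
move=> c Hc; apply: (PR_ext _ (ex_intro _ c Hc)) => u su; case: u su => [|j p] //= _.
elim: j => [|j IH] //.
have E : iota 0 j.+1 = iota 0 j ++ [:: j] by rewrite -addn1 iotaD.
rewrite E all_cat /= IH drop0 andbT.
by case: (all _ _).
Qed.

Lemma PR_allseq n T (s : seq T) (P : T -> seq nat -> bool) :
  (forall x, PRn n (fun v => P x v)) -> PRn n (fun v => all (P^~ v) s).
Proof.
move=> HP; elim: s => [|x s IH]; first exact: PR_const.
by have := PR_andb (HP x) IH; apply: PR_ext.
Qed.

Lemma PR_odd0 : PRn 1 (fun v => odd (nth 0 v 0)).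
Proof.
have := @PR_prim 0 (fun _ => 0) (fun v => 1 - nth 0 v 1) (PR_const _ _)
  (PR_sub (PR_const _ _) (@PR_proj 2 1 isT)).
apply: PR_ext => [[|a [|]]] //= _; elim: a => //= a ->; by case: (odd a).
Qed.

Lemma PR_odd n f : PRn n f -> PRn n (fun v => odd (f v)).
Proof. exact: (PR_comp1 (g := fun a => nat_of_bool (odd a)) PR_odd0). Qed.

Lemma PR_half0 : PRn 1 (fun v => (nth 0 v 0)./2).
Proof.
have := @PR_prim 0 (fun _ => 0) (fun v => nth 0 v 1 + odd (nth 0 v 0)) (PR_const _ _)
  (PR_add (@PR_proj 2 1 isT) (PR_odd (@PR_proj 2 0 isT))).
apply: PR_ext => [[|a [|]]] //= _; elim: a => //= a ->.
by rewrite uphalf_half addnC.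
Qed.

Lemma PR_half n f : PRn n f -> PRn n (fun v => (f v)./2).
Proof. exact: (PR_comp1 (g := half) PR_half0). Qed.

Lemma PR_pow20 : PRn 1 (fun v => 2 ^ (nth 0 v 0)).
Proof.
have := @PR_prim 0 (fun _ => 1) (fun v => nth 0 v 1 + nth 0 v 1) (PR_const _ _)
  (PR_add (@PR_proj 2 1 isT) (@PR_proj 2 1 isT)).
apply: PR_ext => [[|a [|]]] //= _; elim: a => //= a ->.
by rewrite expnS mul2n addnn.
Qed.

Lemma PR_pow2 n f : PRn n f -> PRn n (fun v => 2 ^ (f v)).
Proof. exact: (PR_comp1 (g := fun a => 2 ^ a) PR_pow20). Qed.

Definition hdc (x : nat) : nat := find (fun e => odd (iter e half x)) (iota 0 x).
Definition tlc (x : nat) : nat := iter (hdc x).+1 half x.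
Definition consc (a x : nat) : nat := 2 ^ a * x.*2.+1.

Lemma iter_half e x : iter e half x = x %/ 2 ^ e.
Proof.
elim: e => [|e IH] /=; first by rewrite divn1.
by rewrite IH -divn2 -divnMA expnSr.
Qed.

Lemma code_cons a s : CodeSeq.code (a :: s) = consc a (CodeSeq.code s).
Proof. by []. Qed.

Lemma hdc_cons a x : hdc (consc a x) = a.
Proof.
rewrite /hdc /consc.
have Ha : a < 2 ^ a * x.*2.+1.
  by apply: (leq_trans (ltn_expl a (isT : 1 < 2))); rewrite leq_pmulr.
have E : iota 0 (2 ^ a * x.*2.+1) = iota 0 a ++ iota a (2 ^ a * x.*2.+1 - a).
  by rewrite -{1}(subnKC (ltnW Ha)) iotaD.
rewrite E find_cat size_iota.
have -> : has (fun e => odd (iter e half (2 ^ a * x.*2.+1))) (iota 0 a) = false.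
  apply/negbTE/hasPn => e; rewrite mem_iota add0n => /andP [_ lea].
  rewrite iter_half (_ : 2 ^ a * _ = 2 ^ (a - e) * x.*2.+1 * 2 ^ e); last first.
    by rewrite mulnAC -expnD subnK // ltnW.
  by rewrite mulnK ?expn_gt0 // oddM oddX subn_eq0 leqNgt lea.
rewrite -(subnSK Ha) /= iter_half mulKn ?expn_gt0 //.
by rewrite oddS odd_double /= addn0.
Qed.

Lemma tlc_cons a x : tlc (consc a x) = x.
Proof.
rewrite /tlc hdc_cons iter_half expnSr divnMA /consc mulKn ?expn_gt0 //.
by rewrite divn2 /= uphalf_double.
Qed.

Lemma tlc0 : tlc 0 = 0.
Proof. by rewrite /tlc iter_half div0n. Qed.
Lemma hdc0 : hdc 0 = 0.
Proof. by []. Qed.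

Lemma tlc_lt x : 0 < x -> tlc x < x.
Proof. move=> x0; rewrite /tlc iter_half; apply: ltn_Pdiv => //; by rewrite -[1]/(2^0) ltn_exp2l. Qed.

Lemma decode_pos x : 0 < x -> CodeSeq.decode x = hdc x :: CodeSeq.decode (tlc x).
Proof.
move=> x0; have := CodeSeq.decodeK x; case E: (CodeSeq.decode x) => [|a s] Ex.
  by rewrite -Ex in x0.
by rewrite -Ex code_cons hdc_cons tlc_cons CodeSeq.codeK.
Qed.

Lemma PR_hdc0 : PRn 1 (fun v => hdc (nth 0 v 0)).
Proof.
rewrite /hdc; apply: (PR_find (P := fun e v => odd (iter e half (nth 0 v 0)))); last exact: PR_proj.
apply: PR_odd; apply: PR_iter; first exact: PR_half0.
  by apply: (PR_ext _ (@PR_proj 2 0 isT)); case.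
by apply: (PR_ext _ (@PR_proj 2 1 isT)); case=> [|a [|b [|]]].
Qed.

Lemma PR_hdc n f : PRn n f -> PRn n (fun v => hdc (f v)).
Proof. exact: (PR_comp1 (g := hdc) PR_hdc0). Qed.

Lemma PR_tlc0 : PRn 1 (fun v => tlc (nth 0 v 0)).
Proof.
rewrite /tlc; apply: PR_iter; first exact: PR_half0.
  by apply: PR_succ; apply: PR_hdc; apply: PR_proj.
exact: PR_proj.
Qed.

Lemma PR_tlc n f : PRn n f -> PRn n (fun v => tlc (f v)).
Proof. exact: (PR_comp1 (g := tlc) PR_tlc0). Qed.

Lemma PR_consc n f g : PRn n f -> PRn n g -> PRn n (fun v => consc (f v) (g v)).
Proof.
move=> Hf Hg; rewrite /consc; apply: PR_mul; first exact: PR_pow2.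
apply: PR_succ; have := PR_add Hg Hg; apply: PR_ext => v _; by rewrite addnn.
Qed.

Lemma iter_tlc c y : iter c tlc y <= y - c.
Proof.
elim: c => [|c IH] /=; first by rewrite subn0.
case E: (iter c tlc y) => [|z]; first by rewrite tlc0.
rewrite subnS; apply: (@leq_trans z); first by rewrite -ltnS tlc_lt.
by move: IH; rewrite E; case: (y - c).
Qed.

Definition foldc (op : nat -> nat -> seq nat -> nat) (base : seq nat -> nat) (x : nat) (v : seq nat) :=
  foldr (fun e acc => op e acc v) (base v) (CodeSeq.decode x).

Lemma PR_foldc n op base X :
  PRn n.+2 (fun u => op (nth 0 u 0) (nth 0 u 1) (drop 2 u)) -> PRn n base -> PRn n X ->
  PRn n (fun v => foldc op base (X v) v).
Proof.
move=> Hop Hb HX; apply: (PR_cons (g := fun u => foldc op base (head 0 u) (behead u))) => //.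
pose tt (u : seq nat) := iter (nth 0 u 2 - (nth 0 u 0).+1) tlc (nth 0 u 2).
have Ht : PRn (n.+3) tt.
  apply: PR_iter; first exact: PR_tlc0.
    by apply: PR_sub; [apply: PR_proj | apply: PR_succ; apply: PR_proj].
  exact: PR_proj.
have Hb3 : PRn n.+3 (fun u => base (drop 3 u)) by have := PR_drop 3 Hb; rewrite addn3.
have Hop3 : PRn n.+3 (fun u => op (hdc (tt u)) (nth 0 u 1) (drop 3 u)).
  have := @PR_consl n 3 (fun u => op (nth 0 u 0) (nth 0 u 1) (drop 2 u))
    [:: fun u => hdc (tt u); fun u => nth 0 u 1] Hop.
  rewrite addn3 => /(_ (conj (PR_hdc Ht) (conj (@PR_proj n.+3 1 isT) I))).
  by apply: PR_ext => u _ /=; rewrite drop0.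
have Hb1 : PRn n.+1 (fun u => base (behead u)).
  by have := PR_drop 1 Hb; rewrite addn1; apply: PR_ext => v _; rewrite drop1.
have HG := @PR_prim n.+1 (fun u => base (behead u))
  (fun u => if tt u == 0 then base (drop 3 u) else op (hdc (tt u)) (nth 0 u 1) (drop 3 u))
  Hb1
  (PR_if (PR_eqn Ht (PR_const _ 0)) Hb3 Hop3).
have := PR_cons HG (@PR_proj n.+1 0 isT).
apply: PR_ext => [[|x v]] //= _.
have key : forall j, j <= x -> prec (fun u => base (behead u))
  (fun u => if tt u == 0 then base (drop 3 u) else op (hdc (tt u)) (nth 0 u 1) (drop 3 u))
  j (x :: v) = foldr (fun e acc => op e acc v) (base v) (CodeSeq.decode (iter (x - j) tlc x)).
  elim=> [|j IH] lejx /=.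
    by rewrite subn0; have := iter_tlc x x; rewrite subnn leqn0 => /eqP ->.
  rewrite IH ?(ltnW lejx) // /tt /=.
  case: eqP => [->|/eqP t0]; first by rewrite drop0.
  rewrite drop0 (@decode_pos (iter (x - j.+1) tlc x)) ?lt0n //=.
  by rewrite -iterS -subSn.
by rewrite key // subnn.
Qed.

Definition codeq := CodeSeq.code.
Definition decq := CodeSeq.decode.

Definition catc (x y : nat) : nat := codeq (decq x ++ decq y).

Lemma code_cat s t : codeq (s ++ t) = foldr consc (codeq t) s.
Proof. by elim: s => //= a s ->. Qed.

Lemma catcE x y : catc x y = foldr consc y (decq x).
Proof. by rewrite /catc code_cat /codeq CodeSeq.decodeK. Qed.

Lemma PR_catc n f g : PRn n f -> PRn n g -> PRn n (fun v => catc (f v) (g v)).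
Proof.
move=> Hf Hg.
have := @PR_foldc n (fun e acc _ => consc e acc) g f.
case => //.
  apply: PR_consc; exact: PR_proj.
by move=> c Hc; exists c => v sv; rewrite catcE; apply: Hc.
Qed.

Definition nthc (j x : nat) : nat := hdc (iter j tlc x).

Lemma iter_tlc_code j s : iter j tlc (codeq s) = codeq (drop j s).
Proof.
elim: j => [|j IH] /=; first by rewrite drop0.
rewrite IH; case: (ltnP j (size s)) => hj.
  by rewrite (drop_nth 0 hj) /codeq code_cons tlc_cons.
by rewrite !drop_oversize ?(leq_trans hj) // tlc0.
Qed.

Lemma nthc_code j s : nthc j (codeq s) = nth 0 s j.
Proof.
rewrite /nthc iter_tlc_code; case: (ltnP j (size s)) => hj.
  by rewrite (drop_nth 0 hj) /codeq code_cons hdc_cons.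
by rewrite drop_oversize // nth_default.
Qed.

Lemma PR_nthc n f g : PRn n f -> PRn n g -> PRn n (fun v => nthc (f v) (g v)).
Proof.
move=> Hf Hg; rewrite /nthc; apply: PR_hdc; apply: PR_iter => //; exact: PR_tlc0.
Qed.

Lemma PR_allc n (P : nat -> seq nat -> bool) X :
  PRn n.+1 (fun u => P (head 0 u) (behead u)) -> PRn n X ->
  PRn n (fun v => all (P^~ v) (decq (X v))).
Proof.
move=> HP HX.
have := @PR_foldc n (fun e acc v => P e v && (acc != 0)) (fun _ => true) X.
case => //.
- apply: PR_andb.
    have := @PR_consl n 2 (fun u => P (head 0 u) (behead u)) [:: fun u => nth 0 u 0] HP.
    rewrite addn2 => /(_ (conj (@PR_proj n.+2 0 isT) I)); by apply: PR_ext.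
  by apply: PR_negb; apply: PR_eqn; [apply: PR_proj | apply: PR_const].
- exact: PR_const.
move=> c Hc; apply: (PR_ext _ (ex_intro _ c Hc)) => v _.
rewrite /foldc /decq; elim: (CodeSeq.decode _) => //= a s ->.
by case: (all _ _); case: (P a v).
Qed.

Lemma PR_mem n (L : seq nat) f : PRn n f -> PRn n (fun v => f v \in L).
Proof.
move=> Hf; have := @PR_allseq n nat L (fun a v => f v != a) (fun a => PR_negb (PR_eqn Hf (PR_const n a))).
move/PR_negb; apply: PR_ext => v _.
congr nat_of_bool; rewrite -has_predC; apply/hasP/idP => [[x xL /= /negPn/eqP ->]|fL] //; exists (f v) => //=; exact/negPn/eqP.
Qed.

Fixpoint primb (F0 FS : seq nat -> nat) (n : nat) (p : seq nat) : nat :=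
  match n with
  | 0 => F0 p
  | j.+1 => let z := primb F0 FS j p in if z == 0 then 0 else FS (j :: z.-1 :: p)
  end.

Fixpoint mub (F : seq nat -> nat) (t : nat) (v : seq nat) : nat :=
  match t with
  | 0 => 0
  | j.+1 => let q := mub F j v in
      if q != 0 then q else
      let r := F (j :: v) in if r == 0 then 1 else if r == 1 then j.+2 else 0
  end.

Fixpoint beval (a : nat) (c : code) (t : nat) (v : seq nat) {struct c} : nat :=
  match c with
  | Zero => 1
  | Succ => if a is _.+1 then (head 0 v).+2 else 0
  | Proj i => if i < a then (nth 0 v i).+1 else 0
  | Comp f gs =>
      let ws := map (fun g => beval a g t v) gs in
      if all (fun w => 0 < w) ws then beval (size gs) f t (map predn ws) else 0
  | Prim f g =>
      if a is a'.+1 then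
        primb (fun w => beval a' f t w) (fun w => beval a.+1 g t w) (head 0 v) (behead v)
      else 0
  | Mu f => let q := mub (fun w => beval a.+1 f t w) t v in if 1 < q then q.-1 else 0
  end.

Definition code_ind' (P : code -> Prop) (HZ : P Zero) (HS : P Succ)
  (HP : forall i, P (Proj i))
  (HC : forall f gs, P f -> foldr (fun g Q => P g /\ Q) True gs -> P (Comp f gs))
  (HPr : forall f g, P f -> P g -> P (Prim f g))
  (HM : forall f, P f -> P (Mu f)) : forall c, P c :=
  fix F c := match c with
  | Zero => HZ | Succ => HS | Proj i => HP i
  | Comp f gs => HC f gs (F f)
      ((fix G gs : foldr (fun g Q => P g /\ Q) True gs :=
         match gs with [::] => I | g :: gs' => conj (F g) (G gs') end) gs)
  | Prim f g => HPr f g (F f) (F g)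
  | Mu f => HM f (F f)
  end.

Lemma mub_found F t v n : mub F t v = n.+2 ->
  F (n :: v) = 1 /\ forall m, m < n -> 1 < F (m :: v).
Proof.
elim: t => [|t IH] //=.
case: eqP => [q0|/eqP qn0 /IH //].
case: eqP => [_ [] //|Fn1].
case: eqP => [Ft1 [<-]|]; last by case: (F _) => [|[]].
split => // m lmt.
suff : forall j, j <= t -> mub F j v = 0 -> forall m, m < j -> 1 < F (m :: v).
  by move/(_ t (leqnn t) q0); apply.
elim=> [|j IHj] // ljt /= E m'.
move: E; case: eqP => [E0|/eqP //] /= E1 lm.
case: (ltngtP m' j) => [lm'j|gt|eqj]; first exact: IHj (ltnW ljt) E0 m' lm'j.
  by move: lm; rewrite ltnS leqNgt gt.
by move: E1; rewrite eqj; case: (F _) => [|[|k]].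
Qed.

Lemma beval_sound c : forall a t v y, size v = a -> beval a c t v = y.+1 -> eval c v y.
Proof.
elim/code_ind': c => [||i|f gs IHf IHgs|f g IHf IHg|f IHf] a t v y sv /=.
- by case=> <-; constructor.
- case: a sv => // a; case: v => //= x v _ [<-]; constructor.
- by rewrite -sv; case: ltnP => // li [<-]; constructor.
- case: ifP => // allp Hf.
  apply: ev_comp (IHf _ _ _ _ _ Hf); last by rewrite size_map size_map.
  elim: gs IHgs allp {Hf} => [|g gs IH] /=; first by constructor.
  case=> Hg Hgs /andP [pg ap]; constructor; last exact: IH.
  by apply: (Hg a t) => //; rewrite prednK.
- case: a sv => // a; case: v => //= n v [sv].
  elim: n y => [|n IH] y /=; first by move=> H; constructor; exact: IHf H.
  case: eqP => // /eqP z0 H; apply: ev_primS (IH _ _) (IHg _ _ _ _ _ H) => //.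
    by rewrite prednK // lt0n.
  by rewrite /= sv.
- case: ifP => // lt1 Hq.
  have [n Hn] : exists n, mub (fun w => beval a.+1 f t w) t v = n.+2.
    by move: lt1; case: (mub _ _ _) => [|[|n]] //; exists n.
  move: Hq; rewrite Hn /= => -[<-]; have [H0 H1] := mub_found Hn.
  apply: ev_mu; first by apply: (IHf a.+1 t); rewrite /= ?sv.
  move=> m /H1; case E: (beval _ _ _ _) => [|[|k]] // _; exists k.
  by apply: (IHf a.+1 t); rewrite /= ?sv.
Qed.

Lemma evals_size gs v ws : evals gs v ws -> size ws = size gs.
Proof. by elim=> //= g gs' v' y ys _ _ ->. Qed.

Lemma mub_zero F v n j : (forall m, m < n -> 1 < F (m :: v)) -> j <= n -> mub F j v = 0.
Proof.
move=> H1; elim: j => [|j IH] lejn //=.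
rewrite IH ?(ltnW lejn) //=; have := H1 j lejn.
by case: (F _) => [|[|k]].
Qed.

Lemma mub_hit F v n t : F (n :: v) = 1 -> (forall m, m < n -> 1 < F (m :: v)) -> n < t ->
  mub F t v = n.+2.
Proof.
move=> H0 H1; elim: t => [|t IH] //; rewrite ltnS leq_eqVlt => /orP [/eqP <-|lt] /=.
  by rewrite (mub_zero H1 (leqnn n)) /= H0.
by rewrite IH.
Qed.

Fixpoint beval_complete c v y (H : eval c v y) {struct H} :
  exists t0, forall t, t0 <= t -> beval (size v) c t v = y.+1
with bevals_complete gs v ws (H : evals gs v ws) {struct H} :
  exists t0, forall t, t0 <= t -> map (fun g => beval (size v) g t v) gs = map succn ws.
Proof.
- destruct H as [v|x v|i v li|f gs v ws y Hs Hf|f g v y Hf|f g n v z y Hp Hg|f v n H0 H1].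
  + by exists 0.
  + by exists 0.
  + by exists 0 => t _ /=; rewrite li.
  + have [t1 Ht1] := bevals_complete _ _ _ Hs.
    have [t2 Ht2] := beval_complete _ _ _ Hf.
    exists (maxn t1 t2) => t; rewrite geq_max => /andP [l1 l2] /=.
    rewrite Ht1 // all_map /=.
    have -> : all (fun w => 0 < w.+1) ws by apply/allP.
    by rewrite -map_comp map_id -(evals_size Hs) Ht2.
  + have [t1 Ht1] := beval_complete _ _ _ Hf.
    by exists t1 => t lt /=; rewrite Ht1.
  + have [t1 Ht1] := beval_complete _ _ _ Hp.
    have [t2 Ht2] := beval_complete _ _ _ Hg.
    exists (maxn t1 t2) => t; rewrite geq_max => /andP [l1 l2] /=.
    have := Ht1 t l1; rewrite /= => -> /=.
    by have := Ht2 t l2.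
  + have [t0 Ht0] := beval_complete _ _ _ H0.
    have H1' : forall m, m < n -> exists T, forall t, T <= t -> 1 < beval (size v).+1 f t (m :: v).
      move=> m lm; case: (H1 m lm) => k Hk; case: (beval_complete _ _ _ Hk) => T HT.
      by exists T => t lt; have := HT t lt; rewrite /= => ->.
    have aux : forall n', n' <= n -> exists T, forall m, m < n' -> forall t, T <= t ->
        1 < beval (size v).+1 f t (m :: v).
      elim=> [|n' IH] ln; first by exists 0.
      have [T HT] := IH (ltnW ln).
      have [T1 HT1] := H1' n' ln.
      exists (maxn T T1) => m; rewrite ltnS leq_eqVlt => /orP [/eqP ->|lm] t;
        rewrite geq_max => /andP [l1 l2].
        exact: HT1.
      exact: HT.
    have [T HT] := aux n (leqnn n).
    exists (maxn (maxn t0 T) n.+1) => t; rewrite !geq_max => /andP [/andP [l0 lT] ln] /=.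
    rewrite (@mub_hit _ v n t) //.
      by have := Ht0 t l0.
    by move=> m lm; apply: HT.
- destruct H as [v|g gs v y ys Hg Hs].
  + by exists 0.
  + have [t1 Ht1] := beval_complete _ _ _ Hg.
    have [t2 Ht2] := bevals_complete _ _ _ Hs.
    exists (maxn t1 t2) => t; rewrite geq_max => /andP [l1 l2] /=.
    by rewrite Ht1 // Ht2.
Qed.

Lemma eval_det c v y y' : eval c v y -> eval c v y' -> y = y'.
Proof.
move=> /beval_complete [t1 H1] /beval_complete [t2 H2].
have := H1 (maxn t1 t2) (leq_maxl _ _); rewrite H2 ?leq_maxr //; by case.
Qed.

Lemma PR_beval c : forall a, PRn a.+1 (fun u => beval a c (head 0 u) (behead u)).
Proof.
elim/code_ind': c => [||i|f gs IHf IHgs|f g IHf IHg|f IHf] a.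
- exact: PR_const.
- case: a => [|a].
    by apply: (PR_ext _ (PR_const 1 0)) => [[|t []]].
  have := PR_succ (PR_succ (@PR_proj a.+2 1 isT)).
  by apply: PR_ext => [[|t [|x v]]].
- case: (ltnP i a) => ia.
    have := PR_succ (@PR_proj a.+1 i.+1 ia).
    by apply: PR_ext => [[|t v]] //= _; rewrite ia.
  apply: (PR_ext _ (PR_const a.+1 0)) => [[|t v]] //= _.
  by rewrite ltnNge ia.
- have Hall : PRn a.+1 (fun u => all (fun w => 0 < w) [seq beval a g (head 0 u) (behead u) | g <- gs]).
    elim: gs IHgs => [|g gs IH] /=; first by move=> _; exact: PR_const.
    case=> Hg /IH Hgs; apply: PR_andb => //.
    by apply: PR_ltn; [apply: PR_const | apply: Hg].
  have Hval : PRn a.+1 (fun u => beval (size gs) f (head 0 u)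
      (map predn [seq beval a g (head 0 u) (behead u) | g <- gs])).
    have := @PR_compl a.+1 (fun w => beval (size gs) f (head 0 w) (behead w))
      ((fun u => head 0 u) :: [seq (fun u => (beval a g (head 0 u) (behead u)).-1) | g <- gs]).
    rewrite /= size_map => /(_ (IHf _)).
    case.
      split; first by apply: (PR_ext _ (@PR_proj a.+1 0 isT)) => [[]].
      clear Hall; elim: gs IHgs => [|g gs IH]; first by [].
      move=> [Hg /IH Hgs]; split => //.
      exact: PR_pred.
    move=> c Hc; apply: (PR_ext _ (ex_intro _ c Hc)) => u _ /=.
    by rewrite -!map_comp.
  have := PR_if Hall Hval (PR_const _ 0).
  by apply: PR_ext.
- case: a => [|a].
    by apply: (PR_ext _ (PR_const 1 0)) => [[|t []]].
  have Hr : PRn a.+3 (fun u => beval a.+2 g (nth 0 u 2) (nth 0 u 0 :: (nth 0 u 1).-1 :: drop 3 u)).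
    have := @PR_consl a 3 (fun w => beval a.+2 g (head 0 w) (behead w))
      [:: fun u => nth 0 u 2; fun u => nth 0 u 0; fun u => (nth 0 u 1).-1] (IHg _).
    rewrite addn3; case.
      split; first exact: PR_proj.
      split; first exact: PR_proj.
      split; last by [].
      exact: PR_pred (PR_proj _).
    by move=> c Hc; apply: (PR_ext _ (ex_intro _ c Hc)).
  have HS : PRn a.+3 (fun u => if nth 0 u 1 == 0 then 0 else
        beval a.+2 g (nth 0 u 2) (nth 0 u 0 :: (nth 0 u 1).-1 :: drop 3 u)).
    by apply: PR_ifz => //; [apply: PR_proj | apply: PR_const].
  have Haux := PR_prim (IHf a) HS.
  have := @PR_consl a 2 _ [:: fun u => nth 0 u 1; fun u => nth 0 u 0] Haux.
  rewrite addn2; case.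
    by split; [apply: PR_proj | split; [apply: PR_proj|]].
  move=> c Hc; apply: (PR_ext _ (ex_intro _ c Hc)) => [[|t [|n p]]] //= _.
  rewrite drop0; elim: n => [|n IH] //=.
  by rewrite IH drop0.
- have Hr : PRn a.+3 (fun u => beval a.+1 f (nth 0 u 2) (nth 0 u 0 :: drop 3 u)).
    have := @PR_consl a 3 (fun w => beval a.+1 f (head 0 w) (behead w))
      [:: fun u => nth 0 u 2; fun u => nth 0 u 0] (IHf _).
    rewrite addn3; case.
      by split; [apply: PR_proj | split; [apply: PR_proj|]].
    by move=> c Hc; apply: (PR_ext _ (ex_intro _ c Hc)).
  have HS : PRn a.+3 (fun u => if nth 0 u 1 != 0 then nth 0 u 1 else
       if beval a.+1 f (nth 0 u 2) (nth 0 u 0 :: drop 3 u) == 0 then 1 else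
       if beval a.+1 f (nth 0 u 2) (nth 0 u 0 :: drop 3 u) == 1 then (nth 0 u 0).+2 else 0).
    apply: PR_if; first by apply: PR_negb; apply: PR_eqn; [apply: PR_proj|apply: PR_const].
      exact: PR_proj.
    apply: PR_if; first by apply: PR_eqn => //; apply: PR_const.
      exact: PR_const.
    apply: PR_if; first by apply: PR_eqn => //; apply: PR_const.
      by apply: PR_succ; apply: PR_succ; apply: PR_proj.
    exact: PR_const.
  have Haux := PR_prim (PR_const a.+1 0) HS.
  have Hq := PR_cons Haux (@PR_proj a.+1 0 isT).
  have := PR_if (PR_ltn (PR_const _ 1) Hq) (PR_pred Hq) (PR_const _ 0).
  apply: PR_ext => [[|t v]] //= _.
  suff -> : forall j, prec (fun=> 0) (fun u => if nth 0 u 1 != 0 then nth 0 u 1 else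
       if beval a.+1 f (nth 0 u 2) (nth 0 u 0 :: drop 3 u) == 0 then 1 else
       if beval a.+1 f (nth 0 u 2) (nth 0 u 0 :: drop 3 u) == 1 then (nth 0 u 0).+2 else 0)
       j (t :: v) = mub (fun w => beval a.+1 f t w) j v by [].
  by elim=> [|j IH] //=; rewrite IH drop0.
Qed.

Lemma PR_head n : PRn n.+1 (fun u => head 0 u).
Proof. by apply: (PR_ext _ (@PR_proj n.+1 0 isT)) => [[|a u]]. Qed.

Lemma PR_projb n i : i.+1 < n -> PRn n (fun u => nth 0 (behead u) i).
Proof. by move=> lt; apply: (PR_ext _ (PR_proj lt)) => [[|a u]] _ /=; rewrite ?nth_nil. Qed.

Definition lets n : seq ('I_n * bool) := enum {: 'I_n * bool}.
Definition Lpick n : seq nat := map pickle (lets n).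
Definition validw n x := all (fun e => e \in Lpick n) (decq x).
Definition sel k (e PS QS : nat) : nat :=
  foldr (fun (l : 'I_k * bool) acc => if e == pickle l then (if l.2 then nthc l.1 QS else nthc l.1 PS) else acc) 0 (lets k).
Definition substc k (x PS QS : nat) : nat :=
  foldr (fun e acc => catc (sel k e PS QS) acc) 0 (decq x).
Definition bG (c : code) (t y : nat) : nat := beval 1 c t [:: y].
Definition PairL k : seq nat := [seq pickle [:: l; inv_letter l] | l <- lets k].

Definition stepok k (cR : code) (z z' u v X t d : nat) : bool :=
  [&& validw k X, (X \in PairL k) || (bG cR t X != 0) &
   (if d == 0 then (z == catc u v) && (z' == catc u (catc X v))
    else (z' == catc u v) && (z == catc u (catc X v)))].

Definition chkA k (cR : code) (x D : nat) : bool :=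
  let L := nthc 1 D in let ZS := nthc 2 D in
  [&& nthc 0 ZS == 0, nthc L ZS == x &
   all (fun j => stepok k cR (nthc j ZS) (nthc j.+1 ZS) (nthc j (nthc 3 D)) (nthc j (nthc 4 D))
        (nthc j (nthc 5 D)) (nthc j (nthc 6 D)) (nthc j (nthc 7 D))) (iota 0 L)].

Definition chkB k m (cG : code) (R0 : seq (word 'I_k)) (x D : nat) : bool :=
  let PS := nthc 1 D in let QS := nthc 2 D in let t := nthc 3 D in
  [&& all (fun i => [&& validw m (nthc i PS), validw m (nthc i QS) &
          bG cG t (catc (nthc i PS) (nthc i QS)) == 1]) (iota 0 k),
      all (fun r => bG cG t (substc k (pickle r) PS QS) == 1) R0 &
      bG cG t (substc k x PS QS) == 2].

Arguments chkB : clear implicits.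
Arguments chkA : clear implicits.
Arguments stepok : clear implicits.
Arguments sel : clear implicits.
Arguments substc : clear implicits.
Definition chk k m cG cR R0 (n x : nat) : bool :=
  if nthc 0 n == 0 then ~~ chkA k cR x n else ~~ chkB k m cG R0 x n.

Arguments chk : clear implicits.
Lemma PR_validw k n f : PRn n f -> PRn n (fun v => validw k (f v)).
Proof.
move=> Hf; rewrite /validw.
apply: (PR_allc (P := fun e _ => e \in Lpick k)) => //.
exact: PR_mem (PR_head _).
Qed.

Lemma PR_sel k n e PS QS : PRn n e -> PRn n PS -> PRn n QS ->
  PRn n (fun v => sel k (e v) (PS v) (QS v)).
Proof.
move=> He HP HQ; rewrite /sel; elim: (lets k) => [|l L IH] /=; first exact: PR_const.
apply: PR_if => //; first by apply: PR_eqn => //; apply: PR_const.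
by case: l.2; apply: PR_nthc => //; apply: PR_const.
Qed.

Lemma PR_dropf n f : PRn n f -> PRn n.+2 (fun u => f (drop 2 u)).
Proof. by move/(PR_drop 2); rewrite addn2. Qed.

Lemma PR_substc k n X PS QS : PRn n X -> PRn n PS -> PRn n QS ->
  PRn n (fun v => substc k (X v) (PS v) (QS v)).
Proof.
move=> HX HP HQ.
have := @PR_foldc n (fun e acc v => catc (sel k e (PS v) (QS v)) acc) (fun _ => 0) X.
case => //.
- apply: PR_catc; last exact: PR_proj.
  apply: PR_sel; [exact: PR_proj | exact: PR_dropf | exact: PR_dropf].
- exact: PR_const.
by move=> c Hc; apply: (PR_ext _ (ex_intro _ c Hc)).
Qed.

Lemma PR_bG c n f g : PRn n f -> PRn n g -> PRn n (fun v => bG c (f v) (g v)).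
Proof.
apply: (PR_comp2 (g := bG c)); have := PR_beval c 1.
by apply: PR_ext => [[|t [|y []]]].
Qed.


Lemma PR_ifb n (b c1 c2 : seq nat -> bool) : PRn n (fun v => b v) -> PRn n (fun v => c1 v) ->
  PRn n (fun v => c2 v) -> PRn n (fun v => if b v then c1 v else c2 v).
Proof. move=> Hb H1 H2; have := PR_if Hb H1 H2; apply: PR_ext => v _; by case: (b v). Qed.

Ltac prt1 := match goal with
  | |- PRn _ _ => first
  [ assumption
  | apply: PR_const
  | (apply: PR_proj; done)
  | apply: PR_head
  | (apply: PR_projb; done)
  | apply: PR_andb | apply: PR_orb | apply: PR_negb
  | apply: PR_eqn | apply: PR_ltn
  | apply: PR_nthc | apply: PR_catc | apply: PR_validw | apply: PR_substc | apply: PR_bG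
  | apply: PR_mem
  | apply: PR_succ | apply: PR_add | apply: PR_ifb
  | match goal with
    | |- PRn _ (fun x => nat_of_bool (@?b x)) => fail 1
    | _ => apply: PR_if end ] end.
Ltac prt := repeat prt1.

Lemma PR_stepok k cR n z z' u v X t d :
  PRn n z -> PRn n z' -> PRn n u -> PRn n v -> PRn n X -> PRn n t -> PRn n d ->
  PRn n (fun w => stepok k cR (z w) (z' w) (u w) (v w) (X w) (t w) (d w)).
Proof. move=> *; rewrite /stepok; prt. Qed.

Lemma PR_chk k m cG cR R0 : PRn 2 (fun v => chk k m cG cR R0 (nth 0 v 0) (nth 0 v 1)).
Proof.
rewrite /chk /chkA /chkB; prt.
- apply: PR_all; last by prt.
  apply: PR_stepok; prt.
- apply: PR_all; last by prt.
  prt.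
- apply: PR_allseq => r; prt.
Qed.

Lemma gmulV' (G : group) (x : G) : gmul x (ginv x) = gone G.
Proof.
rewrite -[gmul x _]gmul1 -(gmulV (ginv x)) -gmulA [gmul (ginv x) (gmul x _)]gmulA.
by rewrite gmulV gmul1 gmulV.
Qed.

Lemma gmul1' (G : group) (x : G) : gmul x (gone G) = x.
Proof. by rewrite -(gmulV x) gmulA gmulV' gmul1. Qed.

Lemma gcancel (G : group) (a b c : G) : gmul a b = gmul a c -> b = c.
Proof. by move=> E; rewrite -(gmul1 b) -(gmulV a) -gmulA E gmulA gmulV gmul1. Qed.

Lemma ginv_uniq (G : group) (a b : G) : gmul a b = gone G -> b = ginv a.
Proof. by move=> E; apply: (@gcancel _ a); rewrite E gmulV'. Qed.

Lemma hom1 (H G : group) (f : H -> G) : is_hom f -> f (gone H) = gone G.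
Proof.
move=> hf; apply: (@gcancel _ (f (gone H))).
by rewrite -hf gmul1 gmul1'.
Qed.

Lemma homV (H G : group) (f : H -> G) x : is_hom f -> f (ginv x) = ginv (f x).
Proof.
move=> hf; apply: ginv_uniq; by rewrite -hf gmulV' hom1.
Qed.

Lemma eval_word_cat (G : group) A (e : A -> G) s t :
  eval_word e (s ++ t) = gmul (eval_word e s) (eval_word e t).
Proof. elim: s => [|l s IH] /=; first by rewrite gmul1. by rewrite IH gmulA. Qed.

Lemma eval_word_hom (H G : group) A (f : H -> G) (e : A -> H) s : is_hom f ->
  f (eval_word e s) = eval_word (fun a => f (e a)) s.
Proof.
move=> hf; elim: s => [|l s IH] /=; first exact: hom1.
rewrite hf IH /eval_letter; by case: l.2; rewrite ?homV.
Qed.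

Lemma eval_pair (G : group) A (e : A -> G) a : eval_word e [:: a; inv_letter a] = gone G.
Proof.
rewrite /= /eval_letter /inv_letter /= gmul1'; case: a.2 => /=; by rewrite ?gmulV ?gmulV'.
Qed.

Lemma eval_ins (G : group) A (e : A -> G) u v X : eval_word e X = gone G ->
  eval_word e (u ++ X ++ v) = eval_word e (u ++ v).
Proof. by move=> E; rewrite !eval_word_cat E gmul1. Qed.

Lemma trivial_sound (G : group) k (R : word 'I_k -> Prop) (g : 'I_k -> G) :
  (forall r, R r -> eval_word g r = gone G) -> forall w, trivial_in R w -> eval_word g w = gone G.
Proof.
move=> HR w; elim => // u v.
- by move=> a _ IH; rewrite eval_ins ?eval_pair.
- by move=> a _ IH; rewrite -IH eval_ins ?eval_pair.
- by move=> r Rr _ IH; rewrite eval_ins // HR.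
- by move=> r Rr _ IH; rewrite -IH eval_ins // HR.
Qed.

Lemma pickle_wordE n (s : word 'I_n) : pickle s = codeq (map pickle s).
Proof. by []. Qed.

Lemma decq_pickle n (s : word 'I_n) : decq (pickle s) = map pickle s.
Proof. by rewrite pickle_wordE /decq /codeq CodeSeq.codeK. Qed.

Lemma catc_pickle n (s t : word 'I_n) : catc (pickle s) (pickle t) = pickle (s ++ t).
Proof. by rewrite /catc !decq_pickle -map_cat. Qed.

Lemma pickle_nil n : pickle ([::] : word 'I_n) = 0.
Proof. by []. Qed.

Lemma validw_pickle n (s : word 'I_n) : validw n (pickle s).
Proof.
rewrite /validw decq_pickle all_map; apply/allP => l _ /=.
by rewrite /Lpick map_f // /lets mem_enum.
Qed.

Lemma validwP n x : validw n x -> exists s : word 'I_n, pickle s = x.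
Proof.
rewrite /validw => Hv.
suff [s Hs] : exists s : word 'I_n, map pickle s = decq x.
  by exists s; rewrite pickle_wordE Hs /codeq /decq CodeSeq.decodeK.
elim: (decq x) Hv => [|e es IH] /=; first by exists [::].
case/andP=> /mapP [l _ ->] /IH [s <-]; by exists (l :: s).
Qed.

Lemma pickle_letter_inj n (l l' : 'I_n * bool) : pickle l = pickle l' -> l = l'.
Proof. exact: (pcan_inj pickleK). Qed.

Lemma pickle_word_inj n (s s' : word 'I_n) : pickle s = pickle s' -> s = s'.
Proof. exact: (pcan_inj pickleK). Qed.

Lemma map_pickle_inj n (s s' : word 'I_n) : map pickle s = map pickle s' -> s = s'.
Proof. apply: inj_map => l l'; exact: pickle_letter_inj. Qed.

Lemma split_map n (s : word 'I_n) a b : map pickle s = a ++ b ->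
  exists s1 s2, [/\ s = s1 ++ s2, map pickle s1 = a & map pickle s2 = b].
Proof.
move=> E; exists (take (size a) s), (drop (size a) s); split; first by rewrite cat_take_drop.
  by rewrite map_take E take_size_cat.
by rewrite map_drop E drop_size_cat.
Qed.

Lemma sel_pickle k (l : 'I_k * bool) PS QS :
  sel k (pickle l) PS QS = if l.2 then nthc l.1 QS else nthc l.1 PS.
Proof.
rewrite /sel; have : l \in lets k by rewrite /lets mem_enum.
elim: (lets k) => [|l' L IH] //=; rewrite in_cons => /orP [/eqP <-|lL]; first by rewrite eqxx.
case: eqP => [E|_]; first by rewrite (pickle_letter_inj E).
exact: IH.
Qed.

Definition substw k m (U U' : 'I_k -> word 'I_m) (w : word 'I_k) : word 'I_m :=
  flatten (map (fun l => if l.2 then U' l.1 else U l.1) w).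

Lemma substc_pickle k m (U U' : 'I_k -> word 'I_m) PS QS (w : word 'I_k) :
  (forall i : 'I_k, nthc i PS = pickle (U i)) -> (forall i : 'I_k, nthc i QS = pickle (U' i)) ->
  substc k (pickle w) PS QS = pickle (substw U U' w).
Proof.
move=> HP HQ; rewrite /substc decq_pickle /substw; elim: w => [|l w IH] //=.
rewrite IH sel_pickle -catc_pickle; by case: l.2; rewrite ?HP ?HQ.
Qed.

Lemma eval_substw (G : group) k m (gen : 'I_m -> G) (U U' : 'I_k -> word 'I_m) (w : word 'I_k) :
  (forall i, eval_word gen (U' i) = ginv (eval_word gen (U i))) ->
  eval_word gen (substw U U' w) = eval_word (fun i => eval_word gen (U i)) w.
Proof.
move=> HU; rewrite /substw; elim: w => [|l w IH] //=.
rewrite eval_word_cat IH /eval_letter; by case: l.2; rewrite ?HU.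
Qed.

Lemma decq_catc a b : decq (catc a b) = decq a ++ decq b.
Proof. by rewrite /catc /decq /codeq CodeSeq.codeK. Qed.

Lemma codeq_pickle n (s : word 'I_n) : codeq (map pickle s) = pickle s.
Proof. by []. Qed.

Lemma bG_sound c t y : bG c t y != 0 -> exists z, eval c [:: y] z.
Proof.
rewrite /bG; case E: (beval _ _ _ _) => [|z] // _; exists z.
exact: (beval_sound (a := 1) (t := t)).
Qed.

Lemma chkA_sound k (R : word 'I_k -> Prop) cR :
  (forall w, R w <-> exists y, eval cR [:: pickle w] y) ->
  forall (w : word 'I_k) n, chkA k cR (pickle w) n -> trivial_in R w.
Proof.
move=> HR w n /and3P [Z0 ZL Hall].
suff key : forall j, j <= nthc 1 n -> exists s, pickle s = nthc j (nthc 2 n) /\ trivial_in R s.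
  have [s [Es Ts]] := key _ (leqnn _); rewrite (eqP ZL) in Es.
  by rewrite -(pickle_word_inj Es).
elim=> [|j IH] lj.
  by exists [::]; split; [rewrite (eqP Z0) | constructor].
have [s [Es Ts]] := IH (ltnW lj).
have := allP Hall j; rewrite mem_iota /= => /(_ lj) /and3P [vX okX hd].
have [sx Ex] := validwP vX.
have [Hins Hdel] : (forall u v, trivial_in R (u ++ v) -> trivial_in R (u ++ sx ++ v)) /\
                   (forall u v, trivial_in R (u ++ sx ++ v) -> trivial_in R (u ++ v)).
  case/orP: okX => [/mapP [a _ Ea]|/bG_sound [y Hy]].
    rewrite -Ex in Ea; rewrite (pickle_word_inj Ea).
    by split=> u v; [apply: tr_ins_pair | apply: tr_del_pair].
  have Rx : R sx by apply/HR; exists y; rewrite Ex.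
  by split=> u v; [apply: tr_ins_rel | apply: tr_del_rel].
move: hd; case: eqP => _ /andP [/eqP E1 /eqP E2].
  have := congr1 decq E1; rewrite -Es decq_pickle decq_catc => /split_map [s1 [s2 [E12 H1 H2]]].
  exists (s1 ++ sx ++ s2); split; last by apply: Hins; rewrite -E12.
  by rewrite E2 /catc !decq_catc -Ex decq_pickle -H1 -H2 -!map_cat.
have := congr1 decq E2; rewrite -Es decq_pickle !decq_catc -Ex decq_pickle.
move=> /split_map [s1 [s2' [E12 H1 /split_map [s3 [s4 [Es2 H3 H4]]]]]].
rewrite (map_pickle_inj H3) in Es2; rewrite E12 Es2 in Ts.
exists (s1 ++ s4); split; last exact: Hdel.
by rewrite E1 /catc -H1 -H4 -map_cat.
Qed.

Definition certA k cR (w : word 'I_k) L (zs us vs xs ts ds : seq nat) : Prop :=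
  [/\ size zs = L.+1, [/\ size us = L, size vs = L, size xs = L, size ts = L & size ds = L],
      nth 0 zs 0 = 0 /\ nth 0 zs L = pickle w &
      forall j, j < L -> stepok k cR (nth 0 zs j) (nth 0 zs j.+1) (nth 0 us j) (nth 0 vs j)
                          (nth 0 xs j) (nth 0 ts j) (nth 0 ds j)].

Lemma certA_step k cR (w1 w2 : word 'I_k) L zs us vs xs ts ds u v X t d :
  certA cR w1 L zs us vs xs ts ds -> stepok k cR (pickle w1) (pickle w2) u v X t d ->
  certA cR w2 L.+1 (rcons zs (pickle w2)) (rcons us u) (rcons vs v) (rcons xs X)
    (rcons ts t) (rcons ds d).
Proof.
move=> [sz [su sv sx st sd] [z0 zL] Hst] ok.
split.
- by rewrite size_rcons sz.
- by split; rewrite size_rcons ?su ?sv ?sx ?st ?sd.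
- by rewrite !nth_rcons sz /= z0 ltnn eqxx.
move=> j; rewrite ltnS leq_eqVlt => /orP [/eqP ->|lj].
  rewrite !nth_rcons sz su sv sx st sd ltnS !leqnn ltnn !eqxx ltnn.
  by rewrite zL.
rewrite !nth_rcons sz su sv sx st sd lj ltnS (ltnW lj) ltnS lj.
exact: Hst.
Qed.

Lemma certA_nil k cR : certA cR ([::] : word 'I_k) 0 [:: 0] [::] [::] [::] [::] [::].
Proof. by split. Qed.

Lemma certA_exists k (R : word 'I_k -> Prop) cR :
  (forall w, R w <-> exists y, eval cR [:: pickle w] y) ->
  forall w, trivial_in R w -> exists L zs us vs xs ts ds, certA cR w L zs us vs xs ts ds.
Proof.
move=> HR w; elim.
- by do 7 eexists; exact: certA_nil.
- move=> u v a _ [L [zs [us [vs [xs [ts [ds C]]]]]]].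
  do 7 eexists; apply: (certA_step (u := pickle u) (v := pickle v) (X := pickle [:: a; inv_letter a]) (t := 0) (d := 0) C).
  rewrite /stepok validw_pickle /= !catc_pickle !eqxx /=.
  by rewrite andbT; apply/orP; left; apply: (map_f (fun l : 'I_k * bool => pickle [:: l; inv_letter l])); rewrite /lets mem_enum.
- move=> u v a _ [L [zs [us [vs [xs [ts [ds C]]]]]]].
  do 7 eexists; apply: (certA_step (u := pickle u) (v := pickle v) (X := pickle [:: a; inv_letter a]) (t := 0) (d := 1) C).
  rewrite /stepok validw_pickle /= !catc_pickle !eqxx /=.
  by rewrite andbT; apply/orP; left; apply: (map_f (fun l : 'I_k * bool => pickle [:: l; inv_letter l])); rewrite /lets mem_enum.
- move=> u v r Rr _ [L [zs [us [vs [xs [ts [ds C]]]]]]].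
  have [y Hy] := (HR r).1 Rr.
  have [t0 Ht0] := beval_complete Hy.
  do 7 eexists; apply: (certA_step (u := pickle u) (v := pickle v) (X := pickle r) (t := t0) (d := 0) C).
  rewrite /stepok validw_pickle /= !catc_pickle !eqxx /= /bG Ht0 //.
  by rewrite orbT.
- move=> u v r Rr _ [L [zs [us [vs [xs [ts [ds C]]]]]]].
  have [y Hy] := (HR r).1 Rr.
  have [t0 Ht0] := beval_complete Hy.
  do 7 eexists; apply: (certA_step (u := pickle u) (v := pickle v) (X := pickle r) (t := t0) (d := 1) C).
  rewrite /stepok validw_pickle /= !catc_pickle !eqxx /= /bG Ht0 //.
  by rewrite orbT.
Qed.

Lemma chkA_complete k (R : word 'I_k -> Prop) cR :
  (forall w, R w <-> exists y, eval cR [:: pickle w] y) ->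
  forall w, trivial_in R w -> exists n, nthc 0 n = 0 /\ chkA k cR (pickle w) n.
Proof.
move=> HR w /(certA_exists HR) [L [zs [us [vs [xs [ts [ds [sz _ [z0 zL] Hst]]]]]]]].
set N := codeq [:: 0; L; codeq zs; codeq us; codeq vs; codeq xs; codeq ts; codeq ds].
have HN i : nthc i N = nth 0 [:: 0; L; codeq zs; codeq us; codeq vs; codeq xs; codeq ts; codeq ds] i.
  exact: nthc_code.
exists N; rewrite /chkA; cbv zeta; rewrite !HN /= !nthc_code z0 zL !eqxx /=; split => //.
apply/allP => j; rewrite mem_iota /= => lj; rewrite !nthc_code; exact: Hst.
Qed.

Definition WPspec (G : group) m (gen : 'I_m -> G) (cG : code) :=
  forall w : word 'I_m,
    (eval_word gen w = gone G -> eval cG [:: pickle w] 0) /\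
    (eval_word gen w <> gone G -> eval cG [:: pickle w] 1).

Lemma bG_val1 (G : group) m (gen : 'I_m -> G) cG (HcG : WPspec gen cG) (s : word 'I_m) t :
  bG cG t (pickle s) = 1 -> eval_word gen s = gone G.
Proof.
move=> E; have H0 : eval cG [:: pickle s] 0 by apply: (beval_sound (a := 1) (t := t)).
case: (classic (eval_word gen s = gone G)) => // ne.
by have := eval_det H0 ((HcG s).2 ne).
Qed.

Lemma bG_val2 (G : group) m (gen : 'I_m -> G) cG (HcG : WPspec gen cG) (s : word 'I_m) t :
  bG cG t (pickle s) = 2 -> eval_word gen s <> gone G.
Proof.
move=> E e; have H1 : eval cG [:: pickle s] 1 by apply: (beval_sound (a := 1) (t := t)).
by have := eval_det H1 ((HcG s).1 e).
Qed.

Lemma eq_eval_word (G : group) A (e e' : A -> G) s : (forall a, e a = e' a) ->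
  eval_word e s = eval_word e' s.
Proof. move=> E; elim: s => //= l s ->; by rewrite /eval_letter E. Qed.

Lemma chkB_sound (G H : group) k m (gen : 'I_m -> G) cG (HcG : WPspec gen cG)
  (R : word 'I_k -> Prop) (h : 'I_k -> H)
  (Hpres : forall w, eval_word h w = gone H <-> trivial_in R w) (R0 : seq (word 'I_k))
  (HR0 : forall g : 'I_k -> G, (forall r, r \in R0 -> eval_word g r = gone G) ->
         forall r, R r -> eval_word g r = gone G)
  (w : word 'I_k) n : chkB k m cG R0 (pickle w) n -> eval_word h w <> gone H.
Proof.
rewrite /chkB; cbv zeta; case/and3P => HI HR HW.
set PS := nthc 1 n in HI HR HW; set QS := nthc 2 n in HI HR HW; set t := nthc 3 n in HI HR HW.
pose U (i : 'I_k) : word 'I_m := odflt [::] (unpickle (nthc i PS)).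
pose U' (i : 'I_k) : word 'I_m := odflt [::] (unpickle (nthc i QS)).
have Hi : forall i : 'I_k, (i : nat) \in iota 0 k by move=> i; rewrite mem_iota /= ltn_ord.
have HI' : forall i : 'I_k, [&& validw m (nthc i PS), validw m (nthc i QS) &
          bG cG t (catc (nthc i PS) (nthc i QS)) == 1].
  by move=> i; apply: (allP HI); exact: Hi.
have HU : forall i : 'I_k, nthc i PS = pickle (U i).
  move=> i; have /and3P [v1 _ _] := HI' i.
  by rewrite /U; have [s <-] := validwP v1; rewrite pickleK.
have HU' : forall i : 'I_k, nthc i QS = pickle (U' i).
  move=> i; have /and3P [_ v2 _] := HI' i.
  by rewrite /U'; have [s <-] := validwP v2; rewrite pickleK.
have Hinv : forall i, eval_word gen (U' i) = ginv (eval_word gen (U i)).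
  move=> i; have /and3P [_ _ /eqP] := HI' i.
  rewrite HU HU' catc_pickle => /(bG_val1 HcG); rewrite eval_word_cat.
  exact: ginv_uniq.
pose g i := eval_word gen (U i).
have Hg : forall r, R r -> eval_word g r = gone G.
  apply: HR0 => r rR0; have /eqP := allP HR r rR0.
  rewrite (substc_pickle _ HU HU') => /(bG_val1 HcG).
  by rewrite eval_substw.
move: HW; rewrite (substc_pickle _ HU HU') => /eqP /(bG_val2 HcG); rewrite eval_substw //.
move=> ne /Hpres tw; apply: ne; exact: (trivial_sound Hg tw).
Qed.

Lemma fuel (G : group) m (gen : 'I_m -> G) cG (HcG : WPspec gen cG) (ws : seq (word 'I_m)) :
  exists T, forall s, s \in ws -> forall t, T <= t ->
    (eval_word gen s = gone G -> bG cG t (pickle s) = 1) /\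
    (eval_word gen s <> gone G -> bG cG t (pickle s) = 2).
Proof.
elim: ws => [|s ws [T HT]]; first by exists 0.
have [T1 HT1] : exists T1, forall t, T1 <= t ->
    (eval_word gen s = gone G -> bG cG t (pickle s) = 1) /\
    (eval_word gen s <> gone G -> bG cG t (pickle s) = 2).
  case: (classic (eval_word gen s = gone G)) => e.
    have [t0 Ht0] := beval_complete ((HcG s).1 e).
    by exists t0 => t lt; split => // _; rewrite /bG Ht0.
  have [t0 Ht0] := beval_complete ((HcG s).2 e).
  by exists t0 => t lt; split => // _; rewrite /bG Ht0.
exists (maxn T T1) => s'; rewrite in_cons => /orP [/eqP ->|s'ws] t; rewrite geq_max => /andP [l1 l2].
  exact: HT1.
exact: HT.
Qed.

Lemma nth_enum_map T (F : 'I_T -> nat) (i : 'I_T) : nth 0 [seq F j | j <- enum 'I_T] i = F i.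
Proof. by rewrite (nth_map i) ?size_enum_ord ?ltn_ord // nth_ord_enum. Qed.

Lemma chkB_complete (G H : group) k m (gen : 'I_m -> G) cG (HcG : WPspec gen cG)
  (Hgen : generates gen) (Hres : residually H G)
  (R : word 'I_k -> Prop) (h : 'I_k -> H)
  (Hpres : forall w, eval_word h w = gone H <-> trivial_in R w) (R0 : seq (word 'I_k))
  (HR0sub : forall r, r \in R0 -> R r)
  (w : word 'I_k) : eval_word h w <> gone H ->
  exists n, nthc 0 n <> 0 /\ chkB k m cG R0 (pickle w) n.
Proof.
move=> Hw; have [f [hf Hf]] := Hres _ Hw.
pose g i := f (h i).
have [U HU] := fin_all_exists (fun i : 'I_k => Hgen (g i)).
have [U' HU'] := fin_all_exists (fun i : 'I_k => Hgen (ginv (g i))).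
have Hinv : forall i, eval_word gen (U' i) = ginv (eval_word gen (U i)) by move=> i; rewrite HU HU'.
have Hsub : forall r, eval_word gen (substw U U' r) = f (eval_word h r).
  move=> r; rewrite eval_substw // eval_word_hom //; exact: eq_eval_word.
have [T HT] := fuel HcG ([seq U i ++ U' i | i <- enum 'I_k] ++ [seq substw U U' r | r <- R0]
                         ++ [:: substw U U' w]).
set N := codeq [:: 1; codeq [seq pickle (U i) | i <- enum 'I_k];
                codeq [seq pickle (U' i) | i <- enum 'I_k]; T].
have HN i : nthc i N = nth 0 [:: 1; codeq [seq pickle (U i) | i <- enum 'I_k];
                codeq [seq pickle (U' i) | i <- enum 'I_k]; T] i by exact: nthc_code.
have HPS : forall i : 'I_k, nthc i (nthc 1 N) = pickle (U i).
  by move=> i; rewrite HN /= nthc_code (nth_enum_map (fun j => pickle (U j))).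
have HQS : forall i : 'I_k, nthc i (nthc 2 N) = pickle (U' i).
  by move=> i; rewrite HN /= nthc_code (nth_enum_map (fun j => pickle (U' j))).
exists N; split; first by rewrite HN.
have HT3 : nthc 3 N = T by rewrite HN.
rewrite /chkB; cbv zeta; rewrite HT3; apply/and3P; split.
- apply/allP => j; rewrite mem_iota /= => lj.
  have -> : j = Ordinal lj by [].
  rewrite !HPS !HQS !validw_pickle catc_pickle /=.
  have := HT (U (Ordinal lj) ++ U' (Ordinal lj)).
  rewrite !mem_cat (map_f (fun i => U i ++ U' i)) ?mem_enum // => /(_ isT T (leqnn _)) [H1 _].
  by rewrite H1 // eval_word_cat Hinv gmulV'.
- apply/allP => r rR0; rewrite (substc_pickle _ HPS HQS).
  have := HT (substw U U' r).
  rewrite !mem_cat (map_f (substw U U')) ?orbT // => /(_ isT T (leqnn _)) [H1 _].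
  rewrite H1 // Hsub.
  have -> : eval_word h r = gone H.
    apply/Hpres; have := tr_ins_rel (u := [::]) (v := [::]) (HR0sub _ rR0) (@tr_nil _ R).
    by rewrite /= cats0.
  exact: hom1.
- rewrite (substc_pickle _ HPS HQS).
  have := HT (substw U U' w).
  rewrite !mem_cat mem_seq1 eqxx !orbT => /(_ isT T (leqnn _)) [_ H2].
  by rewrite H2 // Hsub.
Qed.

Definition eq_of (G : group) k (r : word 'I_k) : equation G k :=
  map (fun l => ((inr l.1 : (G + 'I_k)%type), l.2)) r.

Lemma eval_eq_of (G : group) k (g : 'I_k -> G) r : eval_word (subst g) (eq_of G r) = eval_word g r.
Proof. by elim: r => //= l r ->. Qed.

Lemma getR0 (G : group) k (R : word 'I_k -> Prop) (Sigma0 : seq (equation G k)) :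
  (forall s, inl_ s Sigma0 -> exists r, R r /\ s = eq_of G r) ->
  exists R0 : seq (word 'I_k), (forall r, r \in R0 -> R r) /\
    (forall g, (forall r, r \in R0 -> eval_word g r = gone G) ->
       forall s, inl_ s Sigma0 -> eval_word (subst g) s = gone G).
Proof.
elim: Sigma0 => [|s0 S IH] H; first by exists [::].
have [|R0 [H1 H2]] := IH; first by move=> s Hs; apply: H; right.
have [r0 [Rr0 Es0]] := H s0 (or_introl erefl).
exists (r0 :: R0); split.
  by move=> r; rewrite in_cons => /orP [/eqP ->|/H1].
move=> g Hg s [<-|Hs].
  by rewrite Es0 eval_eq_of; apply: Hg; rewrite mem_head.
by apply: H2 => // r rR0; apply: Hg; rewrite in_cons rR0 orbT.
Qed.

Unset Implicit Arguments.
Theorem mainTheorem4 (G : group) :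
  equationally_noetherian G -> has_solvable_WP G ->
  forall (H : group) (k : nat) (h : 'I_k -> H),
    recursively_presented_wrt h -> residually H G ->
    solvable_WP_wrt h.
Proof.
move=> EN [m [gen [Hgen [cG HcG]]]] H k h [R [[cR HcR] [Hgenh Hpres]]] Hres.
have HcG' : WPspec gen cG by [].
pose Sigma := fun s : equation G k => exists r, R r /\ s = eq_of G r.
have [Sigma0 [Hsub Hiff]] := EN k Sigma.
have [R0 [HR0sub HR0]] := getR0 Hsub.
have HR0' : forall g : 'I_k -> G, (forall r, r \in R0 -> eval_word g r = gone G) ->
    forall r, R r -> eval_word g r = gone G.
  move=> g Hg r Rr; rewrite -eval_eq_of.
  by apply: (proj2 (Hiff g) (HR0 g Hg)); exists r.
have [cC HcC] := @PR_chk k m cG cR R0.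
have [cO HcO] : PRn 1 (fun v => nthc 0 (nth 0 v 0) != 0) by prt.
exists (Comp cO [:: Mu cC]) => w.
have Hex : exists n, ~~ chk k m cG cR R0 n (pickle w).
  case: (classic (eval_word h w = gone H)) => e.
    have [n [n0 Hn]] := chkA_complete HcR ((Hpres w).1 e).
    by exists n; rewrite /chk n0 eqxx Hn.
  have [n [n0 Hn]] := chkB_complete HcG' Hgen Hres Hpres HR0sub e.
  by exists n; rewrite /chk; move/eqP/negbTE: n0 => ->; rewrite Hn.
case: (ex_minnP Hex) => n Hn Hmin.
have Hev : eval (Comp cO [:: Mu cC]) [:: pickle w] (nthc 0 n != 0).
  apply: (@ev_comp _ _ _ [:: n]); last exact: (HcO [:: n] erefl).
  apply: evs_cons; last by constructor.
  apply: ev_mu.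
    by have := HcC [:: n; pickle w] erefl; rewrite /= (negbTE Hn).
  move=> m' lm; exists 0; have := HcC [:: m'; pickle w] erefl => /=.
  case E: (chk _ _ _ _ _ _ _) => //.
  by have := Hmin m'; rewrite E leqNgt lm => /(_ isT).
split=> Hw.
  case E: (nthc 0 n == 0); first by rewrite E in Hev.
  move: Hn; rewrite /chk E negbK => /(chkB_sound HcG' Hpres HR0') ne; by case: (ne Hw).
case E: (nthc 0 n == 0); last by rewrite E in Hev.
move: Hn; rewrite /chk E negbK => /(chkA_sound HcR) /Hpres e; by case: (Hw e).
Qed.
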